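(* Let $G_S(s)=\frac{N_S(s)}{D_S(s)}$ and $G_T(s)=\frac{N_T(s)}{D_T(s)}$ be rational transfer functions of two continuous-time, single-input single-output, linear time-invariant systems (the source system and the target system), each written with coprime real polynomials and nonzero numerator. Assume both $G_S$ and $G_T$ are BIBO stable, and assume $G_S$ is minimum-phase. Then there exists a causal, BIBO stable rational transfer function $G_\alpha(s)$ (the transfer map from the source system to the target system) achieving perfect transfer learning, i.e. such that $G_\alpha(s)G_S(s)=G_T(s)$ (equivalently, for every bounded input $d$, feeding the source output $y_s$ with $Y_s(s)=G_S(s)D(s)$ into $G_\alpha$ yields exactly the target output $y_t$ with $Y_t(s)=G_T(s)D(s)$), if and only if the relative degree of $G_S$ is less than or equal to the relative degree of $G_T$. *)

(* Defs.v *)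
From HB Require Import structures.
From mathcomp Require Import all_boot all_order all_algebra.
From mathcomp Require Import complex reals.
Set Implicit Arguments. Unset Strict Implicit. Unset Printing Implicit Defensive.
Import Order.TTheory GRing.Theory Num.Theory.
Local Open Scope ring_scope.

(* A rational transfer function G(s) = N(s)/D(s) is represented by the pair
   (N, D) of real polynomials. *)

Definition cpoly (R : rcfType) (p : {poly R}) : {poly R[i]} :=
  map_poly (fun x : R => (x%:C)%C) p.

Definition coprime_rep (R : rcfType) (N D : {poly R}) : Prop :=
  [/\ N != 0, D != 0 & coprimep N D].

Definition causal_tf (R : rcfType) (N D : {poly R}) : Prop :=
  (size N <= size D)%N.

Definition hurwitz (R : rcfType) (D : {poly R}) : Prop :=
  forall z : R[i], root (cpoly D) z -> complex.Re z < 0.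

(* BIBO stability of a rational transfer function given in coprime form:
   proper and all poles in the open left half-plane *)
Definition bibo_stable (R : rcfType) (N D : {poly R}) : Prop :=
  causal_tf N D /\ hurwitz D.

Definition minimum_phase (R : rcfType) (N D : {poly R}) : Prop :=
  forall z : R[i], root (cpoly N) z -> complex.Re z < 0.

Definition rel_deg (R : rcfType) (N D : {poly R}) : int :=
  (size D)%:Z - (size N)%:Z.

(* Main.v *)
Require Import Defs.
From HB Require Import structures.
From mathcomp Require Import all_boot all_order all_algebra.
From mathcomp Require Import complex reals.
From mathcomp Require Import zify.
Import Order.TTheory GRing.Theory Num.Theory.
Local Open Scope ring_scope.

Lemma cpolyM (R : rcfType) (p q : {poly R}) : cpoly (p * q) = cpoly p * cpoly q.
Proof.
rewrite /cpoly.
change (map_poly (real_complex R) (p * q) = map_poly (real_complex R) p * map_poly (real_complex R) q).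
by rewrite rmorphM.
Qed.

Lemma sizeM_nz (R : rcfType) (p q : {poly R}) : p != 0 -> q != 0 ->
  (size (p * q)).+1 = (size p + size q)%N.
Proof.
move=> hp hq; rewrite size_mul // prednK //.
by rewrite addn_gt0 size_poly_gt0 hp.
Qed.

Arguments sizeM_nz {R p q}.

Theorem theorem1 (R : realType) (NS DS NT DT : {poly R}) :
  coprime_rep NS DS -> coprime_rep NT DT ->
  bibo_stable NS DS -> bibo_stable NT DT ->
  minimum_phase NS DS ->
  ((exists Na Da : {poly R},
      [/\ Da != 0, coprimep Na Da, causal_tf Na Da, bibo_stable Na Da
        & Na * NS * DT = NT * Da * DS])
   <-> rel_deg NS DS <= rel_deg NT DT).
Proof.
move=> [nNS nDS _] [nNT nDT _] [_ hDS] [_ hDT] mpS.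
rewrite /rel_deg.
split.
- move=> [Na [Da [nDa _ cau _ E]]].
  have nNa : Na != 0.
    apply/eqP=> Na0; move: E; rewrite Na0 !mul0r => /esym/eqP.
    by rewrite !mulf_eq0 (negbTE nNT) (negbTE nDa) (negbTE nDS).
  have := congr1 (fun p : {poly R} => size p) E => /= E'.
  have h1 : (size (Na*NS)).+1 = (size Na + size NS)%N by apply: sizeM_nz.
  have h2 : (size (Na*NS*DT)).+1 = (size (Na*NS)%R + size DT)%N by apply: sizeM_nz; rewrite ?mulf_neq0.
  have h3 : (size (NT*Da)).+1 = (size NT + size Da)%N by apply: sizeM_nz.
  have h4 : (size (NT*Da*DS)).+1 = (size (NT*Da)%R + size DS)%N by apply: sizeM_nz; rewrite ?mulf_neq0.
  have {}cau : (size Na <= size Da)%N := cau.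
  have {}E' : size (Na*NS*DT) = size (NT*Da*DS) by rewrite E.
  have hn : (size DS + size NT <= size DT + size NS)%N by lia.
  by rewrite lerBlDr addrAC lerBrDr -!PoszD lez_nat.
- move=> hle.
  set P := NT * DS. set Q := DT * NS.
  have nP : P != 0 by rewrite mulf_neq0.
  have nQ : Q != 0 by rewrite mulf_neq0.
  set g := gcdp P Q.
  have ng : g != 0 by rewrite gcdp_eq0 negb_and nP.
  have eP : P %/ g * g = P by rewrite divpK // dvdp_gcdl.
  have eQ : Q %/ g * g = Q by rewrite divpK // dvdp_gcdr.
  have nDa : Q %/ g != 0 by apply/eqP=> h; move: eQ; rewrite h mul0r => /esym/eqP; rewrite (negbTE nQ).
  have nNa : P %/ g != 0 by apply/eqP=> h; move: eP; rewrite h mul0r => /esym/eqP; rewrite (negbTE nP).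
  have cau : causal_tf (P %/ g) (Q %/ g).
    rewrite /causal_tf.
    have h1 : (size P).+1 = (size (P %/ g)%R + size g)%N by rewrite -{1}eP; apply: sizeM_nz.
    have h2 : (size Q).+1 = (size (Q %/ g)%R + size g)%N by rewrite -{1}eQ; apply: sizeM_nz.
    have h3 : (size P).+1 = (size NT + size DS)%N by apply: sizeM_nz.
    have h4 : (size Q).+1 = (size DT + size NS)%N by apply: sizeM_nz.
    apply: (_ : (size (P %/ g)%R <= size (Q %/ g)%R)%N -> _) => [//|].
    move: hle; rewrite lerBlDr addrAC lerBrDr -!PoszD lez_nat => hle.
    rewrite -(leq_add2r (size g)) -h1 -h2 h3 h4 addnC; exact: hle.
  exists (P %/ g), (Q %/ g); split => //.
  + by apply: coprimep_div_gcd; rewrite nP.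
  + split => // z rz.
    have : root (cpoly Q) z by rewrite -eQ cpolyM rootM rz.
    rewrite /Q cpolyM rootM => /orP [r|r]; [exact: hDT | exact: mpS].
  + apply: (mulIf ng).
    rewrite mulrAC [_ * NS * g]mulrAC eP.
    rewrite [RHS]mulrAC -[NT * _ * g]mulrA eQ /P /Q.
    rewrite -!mulrA; congr (_ * _).
    by rewrite mulrC [NS * DT]mulrC -mulrA.
Qed.
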